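(* Let $(X,T,Y)$ be a random triple as described in the context, let $\psi$ be a score variable satisfying Assumption 1, and let $\mathcal G=\{g_\theta:\theta\in\Theta\}$ be a parametrized class of utility functions. Suppose the policy class is correctly specified for the surrogate loss, in the sense that $$\mathcal G\cap\Big(\operatorname*{argmin}_{g\ \text{unconstrained}}\mathbb E\big[|\psi|\, l(g(X),\operatorname{sign}(\psi))\big]\Big)\neq\varnothing,$$ where the argmin ranges over all measurable functions $g:\mathcal X\to\mathbb R$. Then every minimizer of the surrogate-loss risk is an optimal policy: for all $\theta^*\in\operatorname*{argmin}_{\theta\in\Theta}L(\theta)$, $$J(\theta^* )=\max_{\pi\ \text{unconstrained}}J(\pi),$$ where the maximum ranges over all measurable policies $\pi:\mathcal X\to\{-1,+1\}$.
   Context: $X$ is a context taking values in a space $\mathcal X$, $T\in\{-1,1\}$ is a treatment, $Y\in\mathbb R$ is an outcome, and $Y(-1),Y(1)$ are potential outcomes with $Y=Y(T)$ and $Y(t)\perp T\mid X$ for each $t$. A score variable $\psi$ is a real-valued random variable depending on observables. Assumption 1: $\mathbb E[\psi\mid X]=\mathbb E[Y(1)-Y(-1)\mid X]$ almost surely and $\mathbb E[|\psi|]<\infty$. For a policy $\pi:\mathcal X\to\{-1,+1\}$, $J(\pi)=\mathbb E[\pi(X)(Y(1)-Y(-1))]$. $\Theta\subseteq\mathbb R^d$, each $g_\theta:\mathcal X\to\mathbb R$ is measurable, and $J(\theta)=J(\operatorname{sign}(g_\theta(\cdot)))=\mathbb E[\operatorname{sign}(g_\theta(X))(Y(1)-Y(-1))]$.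 The surrogate (logistic) loss is $l(g,s)=2\log(1+\exp(g))-(s+1)g$ for $g\in\mathbb R$, $s\in\{-1,1\}$, and the population surrogate risk is $L(\theta)=\mathbb E[|\psi|\, l(g_\theta(X),\operatorname{sign}(\psi))]$. *)

(* Defs.v *)
From HB Require Import structures.
From mathcomp Require Import all_boot all_order all_algebra.
From mathcomp Require Import all_classical all_reals all_analysis.
Set Implicit Arguments. Unset Strict Implicit. Unset Printing Implicit Defensive.
Import Order.TTheory GRing.Theory Num.Theory.
Import numFieldNormedType.Exports.
Local Open Scope classical_set_scope.
Local Open Scope ring_scope.

Section Defs.
Context {R : realType}.

(* sign convention: sign(0) = +1, so that sign takes values in {-1,+1} *)
Definition sgn (x : R) : R := if 0 <= x then 1 else -1.

Definition lsur (g s : R) : R := 2 * ln (1 + expR g) - (s + 1) * g.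

Context {d0 : measure_display} {Omega : measurableType d0}
        (P : probability Omega R)
        {d1 : measure_display} {Xsp : measurableType d1}.

Definition surrisk (X : Omega -> Xsp) (psi : Omega -> R) (g : Xsp -> R) : \bar R :=
  (\int[P]_w (`|psi w| * lsur (g (X w)) (sgn (psi w)))%:E)%E.

Definition policy (pi : Xsp -> R) : Prop :=
  measurable_fun setT pi /\ (forall x, pi x = 1 \/ pi x = -1).

Definition Jpol (X : Omega -> Xsp) (Y1 Ym1 : Omega -> R) (pi : Xsp -> R) : \bar R :=
  (\int[P]_w (pi (X w) * (Y1 w - Ym1 w))%:E)%E.

(* E[U | X] = E[V | X] a.s. (for integrable U, V): equality of integrals
   over every event {X in C}, C measurable *)
Definition condexp_eq (X : Omega -> Xsp) (U V : Omega -> R) : Prop :=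
  forall C : set Xsp, measurable C ->
    (\int[P]_(w in X @^-1` C) (U w)%:E = \int[P]_(w in X @^-1` C) (V w)%:E)%E.

(* conditional independence U _||_ V | X : for all Borel A, B there are
   versions p, q of P(U in A | X), P(V in B | X) whose product is a version
   of P(U in A, V in B | X) *)
Definition cond_indep (X : Omega -> Xsp) (U V : Omega -> R) : Prop :=
  forall A B : set R, measurable A -> measurable B ->
  exists p q : Xsp -> R, measurable_fun setT p /\ measurable_fun setT q /\
    forall C : set Xsp, measurable C ->
      [/\ P (X @^-1` C `&` U @^-1` A) = (\int[P]_(w in X @^-1` C) (p (X w))%:E)%E,
          P (X @^-1` C `&` V @^-1` B) = (\int[P]_(w in X @^-1` C) (q (X w))%:E)%E &
          P (X @^-1` C `&` U @^-1` A `&` V @^-1` B)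
            = (\int[P]_(w in X @^-1` C) (p (X w) * q (X w))%:E)%E].

End Defs.

(* Main.v *)
Require Import Defs.
From HB Require Import structures.
From mathcomp Require Import all_boot all_order all_algebra.
From mathcomp Require Import all_classical all_reals all_analysis measurable_realfun.
From mathcomp Require Import ring lra.
Import Order.TTheory GRing.Theory Num.Theory.
Import numFieldNormedType.Exports.
Local Open Scope classical_set_scope.
Local Open Scope ring_scope.

Definition sig {R : realType} (g : R) : R := expR g / (1 + expR g).

Lemma sig_ge0 {R : realType} (g : R) : 0 <= sig g <= 1.
Proof.
rewrite /sig; have h := expR_gt0 g.
apply/andP; split; first by rewrite divr_ge0 // ltW // ?addr_gt0.
by rewrite ler_pdivrMr ?mul1r ?lerDr // addr_gt0.
Qed.

Lemma lsur_ge0 {R : realType} (g s : R) : s = 1 \/ s = -1 -> 0 <= lsur g s.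
Proof.
have h := expR_gt0 g.
have h1 : 0 <= ln (1 + expR g) by apply: ln_ge0; rewrite lerDl ltW.
have h2 : g <= ln (1 + expR g).
  by rewrite -{1}(expRK g) ler_ln ?posrE ?addr_gt0 // lerDr.
rewrite /lsur => -[] ->; lra.
Qed.

Lemma expR_quad {R : realType} (t : R) : `|t| <= 1/2 -> expR t <= 1 + t + 2 * t^+2.
Proof.
move=> ht.
have h1 := expR_ge1Dx (- t).
have h0 := expR_gt0 t.
have e : expR t * expR (- t) = 1 by rewrite -expRD subrr expR0.
have : expR t * (1 - t) <= 1.
  have h2 : 1 - t <= expR (- t) by lra.
  nra.
have [ht1 ht2] : -(1/2) <= t /\ t <= 1/2.
  by move: ht; rewrite ler_norml => /andP[].
move=> hu. nra.
Qed.

Lemma lsur_shift {R : realType} (g t s : R) : `|t| <= 1/2 ->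
  lsur (g + t) s <= lsur g s + t * (2 * sig g - s - 1) + 4 * t^+2.
Proof.
move=> ht.
have eg := expR_gt0 g; have et := expR_gt0 t.
have hb : 0 < 1 + expR g by rewrite addr_gt0.
have ha : 0 < 1 + expR (g + t) by rewrite addr_gt0 // expR_gt0.
have hl : ln (1 + expR (g + t)) - ln (1 + expR g) <= sig g * (expR t - 1).
  rewrite -ln_div ?posrE //.
  have -> : (1 + expR (g + t)) / (1 + expR g) = 1 + sig g * (expR t - 1).
    rewrite /sig expRD; field; lra.
  apply: le_ln1Dx.
  have := sig_ge0 g; move=> /andP[s0 s1].
  have : 0 < (1 + expR (g + t)) / (1 + expR g) by rewrite divr_gt0.
  have -> : (1 + expR (g + t)) / (1 + expR g) = 1 + sig g * (expR t - 1).
    rewrite /sig expRD; field; lra.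
  lra.
have hq := @expR_quad _ t ht.
have := sig_ge0 g; move=> /andP[s0 s1].
have : sig g * (expR t - 1) <= sig g * t + 2 * t ^+ 2.
  have : sig g * (expR t - 1 - t) <= 2 * t^+2.
    have : 0 <= 2 * t ^+ 2 by rewrite mulr_ge0 // sqr_ge0.
    nra.
  lra.
rewrite /lsur; lra.
Qed.
Lemma sigE {R : realType} (g : R) : sig g = expR (g - ln (1 + expR g)).
Proof.
by rewrite expRD expRN lnK // posrE addr_gt0 // expR_gt0.
Qed.
Lemma measurable_sig {R : realType} : measurable_fun setT (@sig R).
Proof.
have -> : @sig R = fun g => expR (g - ln (1 + expR g)) by apply: funext => g; rewrite sigE.
have m0 : measurable_fun setT (fun g : R => expR g) by exact: (@measurable_expR R).
have m1 : measurable_fun setT (fun g : R => 1 + expR g) by exact: measurable_funD.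
have m2 : measurable_fun setT (fun g : R => ln (1 + expR g)) by exact: (measurableT_comp (@measurable_ln R) m1).
have m3 : measurable_fun setT (fun g : R => g - ln (1 + expR g)) by exact: measurable_funB.
exact: (measurableT_comp (@measurable_expR R) m3).
Qed.

Lemma quad_zero {R : realType} (a b : R) : 0 <= b ->
  (forall t : R, `|t| <= 1/2 -> 0 <= t * a + 4 * t^+2 * b) -> a = 0.
Proof.
move=> hb H; apply/eqP; apply/negPn/negP => ha.
set K := 2 * `|a| + 8 * b + 1.
have hK : 0 < K by rewrite /K; have := normr_ge0 a; lra.
have := H (- a / K).
have ht : `|- a / K| <= 1/2.
  rewrite normrM normrN normfV (gtr0_norm hK) ler_pdivrMr //.
  rewrite /K; lra.
move=> /(_ ht).
have -> : - a / K * a + 4 * (- a / K) ^+ 2 * b = a ^+ 2 * (4 * b - K) / K ^+ 2.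
  by field; rewrite gt_eqF.
move=> H2.
have a2 : 0 < a ^+ 2 by rewrite exprn_even_gt0 //.
move: H2; rewrite pmulr_lge0 ?invr_gt0 ?exprn_gt0 // pmulr_rge0 //.
rewrite /K; have := normr_ge0 a; lra.
Qed.

Lemma measurable_sgn {R : realType} : measurable_fun setT (@sgn R).
Proof.
rewrite /sgn; apply: measurable_fun_ifT => //.
exact: measurable_fun_ler.
Qed.

Section Core.
Variables (R : realType) (d0 : measure_display) (Omega : measurableType d0)
  (P : probability Omega R) (d1 : measure_display) (Xsp : measurableType d1)
  (X : Omega -> Xsp) (psi : Omega -> R).
Hypotheses (mX : measurable_fun setT X)
  (ipsi : P.-integrable setT (fun w => (psi w)%:E)).

Lemma mpsi : measurable_fun setT psi.
Proof. by apply/measurable_EFinP; exact: (measurable_int _ ipsi). Qed.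

Lemma integrable_bdd {U k : Omega -> R} :
  P.-integrable setT (fun w => (U w)%:E) -> measurable_fun setT k ->
  (forall w, `|k w| <= 1) ->
  P.-integrable setT (fun w => (U w * k w)%:E).
Proof.
move=> iU mk hk.
apply: (le_integrable measurableT _ _ iU) => //.
  apply/measurable_EFinP; apply: measurable_funM => //.
  by apply/measurable_EFinP; exact: (measurable_int _ iU).
move=> w _ /=; rewrite normrM.
by rewrite lee_fin ler_piMr.
Qed.

Lemma mlsur (u v : Omega -> R) : measurable_fun setT u -> measurable_fun setT v ->
  measurable_fun setT (fun w => lsur (u w) (v w)).
Proof.
move=> mu mv; rewrite /lsur.
apply: measurable_funB.
  apply: measurable_funM => //.
  have m0 : measurable_fun setT (fun w => expR (u w)).
    exact: (measurableT_comp (@measurable_expR R) mu).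
  have m1 : measurable_fun setT (fun w => 1 + expR (u w)).
    exact: measurable_funD.
  exact: (measurableT_comp (@measurable_ln R) m1).
apply: measurable_funM => //.
exact: measurable_funD.
Qed.

Definition Floss (h : Xsp -> R) w := `|psi w| * lsur (h (X w)) (sgn (psi w)).

Lemma sgn_pm (x : R) : sgn x = 1 \/ sgn x = -1.
Proof. by rewrite /sgn; case: ifP; [left|right]. Qed.

Lemma mFloss h : measurable_fun setT h -> measurable_fun setT (Floss h).
Proof.
move=> mh; rewrite /Floss; apply: measurable_funM.
  exact: (measurableT_comp (@normr_measurable R setT) mpsi).
apply: mlsur; first exact: (measurableT_comp mh mX).
exact: (measurableT_comp measurable_sgn mpsi).
Qed.

Lemma Floss_ge0 h w : 0 <= Floss h w.
Proof. by rewrite /Floss mulr_ge0 // lsur_ge0 //; exact: sgn_pm. Qed.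


Lemma iabs : P.-integrable setT (fun w => (`|psi w|)%:E).
Proof. exact: integrable_abse ipsi. Qed.

Lemma risk_cst0 : (surrisk P X psi (fun _ => 0%R) < +oo)%E.
Proof.
rewrite /surrisk.
have -> : (fun w => (`|psi w| * lsur ((fun _ : Xsp => 0%R) (X w)) (sgn (psi w)))%:E)
  = (fun w => ((2 * ln 2)%:E * (`|psi w|)%:E))%E.
  apply: funext => w /=; rewrite /lsur expR0 mulr0 subr0 -EFinM mulrC.
  by congr ((_ * ln _ * _)%:E).
rewrite integralZl //; last exact: iabs.
have := integrable_fin_num measurableT iabs.
move=> /fineK <-; rewrite -EFinM; exact: ltry.
Qed.

Variable G : Xsp -> R.
Hypotheses (mG : measurable_fun setT G)
  (Gmin : forall h, measurable_fun setT h -> (surrisk P X psi G <= surrisk P X psi h)%E).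

Lemma riskG_fin : surrisk P X psi G \is a fin_num.
Proof.
have h0 : (0 <= surrisk P X psi G)%E.
  apply: integral_ge0 => w _; rewrite lee_fin; exact: (Floss_ge0 G w).
rewrite ge0_fin_numE //.
apply: le_lt_trans (risk_cst0).
apply: Gmin; exact: measurable_cst.
Qed.

Lemma iFG : P.-integrable setT (fun w => (Floss G w)%:E).
Proof.
apply/integrableP; split.
  by apply/measurable_EFinP; exact: mFloss.
have -> : (\int[P]_x `|(Floss G x)%:E|)%E = surrisk P X psi G.
  rewrite /surrisk; apply: eq_integral => w _.
  by rewrite /= ger0_norm //; exact: Floss_ge0.
by rewrite -ge0_fin_numE ?riskG_fin //; apply: integral_ge0 => w _; rewrite lee_fin; exact: (Floss_ge0 G w).
Qed.

Definition Qf w := `|psi w| * (2 * sig (G (X w)) - 1).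

Lemma mQf : measurable_fun setT Qf.
Proof.
rewrite /Qf; apply: measurable_funM.
  exact: (measurableT_comp (@normr_measurable R setT) mpsi).
apply: measurable_funB => //; apply: measurable_funM => //.
exact: (measurableT_comp measurable_sig (measurableT_comp mG mX)).
Qed.

Lemma iQf : P.-integrable setT (fun w => (Qf w)%:E).
Proof.
apply: (integrable_bdd iabs).
  apply: measurable_funB => //; apply: measurable_funM => //.
  exact: (measurableT_comp measurable_sig (measurableT_comp mG mX)).
move=> w; have /andP[h0 h1] := sig_ge0 (G (X w)).
rewrite ler_norml; apply/andP; split; lra.
Qed.

Lemma key (C : set Xsp) : measurable C ->
  (\int[P]_w (psi w * \1_C (X w))%:E = \int[P]_w (Qf w * \1_C (X w))%:E)%E.
Proof.
move=> mC.
set i := fun w => \1_C (X w) : R.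
have mi : measurable_fun setT i.
  exact: (measurableT_comp (@measurable_indic _ _ R setT C mC) mX).
have i01 w : i w = 0 \/ i w = 1.
  by rewrite /i /indic; case: (_ \in _); [right|left].
have hi w : `|i w| <= 1 by case: (i01 w) => ->; rewrite ?normr0 ?normr1.
have iPi : P.-integrable setT (fun w => (psi w * i w)%:E).
  exact: integrable_bdd.
have iQi : P.-integrable setT (fun w => (Qf w * i w)%:E).
  exact: (integrable_bdd iQf).
have iB : P.-integrable setT (fun w => (`|psi w| * i w)%:E).
  exact: (integrable_bdd iabs).
have iA : P.-integrable setT (fun w => (Qf w * i w - psi w * i w)%:E).
  apply: (eq_integrable _ (fun w => (Qf w * i w)%:E - (psi w * i w)%:E)%E) => //.
  exact: integrableB.
set a := fine (\int[P]_w (Qf w * i w - psi w * i w)%:E)%E.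
set b := fine (\int[P]_w (`|psi w| * i w)%:E)%E.
have fA := integrable_fin_num measurableT iA.
have fB := integrable_fin_num measurableT iB.
have fG := riskG_fin.
have hb : 0 <= b.
  rewrite /b fine_ge0 //; apply: integral_ge0 => w _.
  by rewrite lee_fin mulr_ge0 //; case: (i01 w) => ->.
have a0 : a = 0.
  apply: (@quad_zero R a b hb) => t ht.
  pose h := fun x => G x + t * \1_C x.
  have mh : measurable_fun setT h.
    apply: measurable_funD => //; apply: measurable_funM => //.
  have := Gmin _ mh.
  have le1 : (surrisk P X psi h <= \int[P]_w
      (Floss G w + t * (Qf w * i w - psi w * i w) + 4 * t^+2 * (`|psi w| * i w))%:E)%E.
    rewrite /surrisk; apply: ge0_le_integral => //.
    - by move=> w _; rewrite lee_fin; exact: (Floss_ge0 h w).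
    - by apply/measurable_EFinP; exact: (mFloss _ mh).
    - apply/measurable_EFinP; apply: measurable_funD; first apply: measurable_funD.
      + exact: (mFloss _ mG).
      + apply: measurable_funM => //; apply: measurable_funB.
          by apply: measurable_funM; [exact: mQf | exact: mi].
        by apply: measurable_funM; [exact: mpsi | exact: mi].
      + apply: measurable_funM => //; apply: measurable_funM => //.
        exact: (measurableT_comp (@normr_measurable R setT) mpsi).
    move=> w _; rewrite lee_fin.
    have hti : `|t * i w| <= 1/2.
      by rewrite normrM; apply: le_trans ht; rewrite ler_piMr.
    have L := @lsur_shift R (G (X w)) (t * i w) (sgn (psi w)) hti.
    have hs : `|psi w| * sgn (psi w) = psi w.
      rewrite /sgn; case: ifP => hp.
        by rewrite mulr1 ger0_norm.
      by rewrite mulrN1 ltr0_norm ?opprK // ltNge hp.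
    have L2 := ler_wpM2l (normr_ge0 (psi w)) L.
    rewrite /Floss /h; apply: le_trans L2 _.
    rewrite le_eqVlt; apply/orP; left; apply/eqP.
    rewrite /Qf /i.
    have -> : psi w * \1_C (X w) = `|psi w| * sgn (psi w) * \1_C (X w) by rewrite hs.
    by case: (i01 w); rewrite /i => ->; ring.
  move=> le2; have le3 := le_trans le2 le1.
  move: le3.
  have -> : (fun w => (Floss G w + t * (Qf w * i w - psi w * i w)
                + 4 * t^+2 * (`|psi w| * i w))%:E)
    = (fun w => ((Floss G w)%:E + t%:E * (Qf w * i w - psi w * i w)%:E)
                + (4 * t^+2)%:E * (`|psi w| * i w)%:E)%E.
    by apply: funext => w; rewrite -!EFinM -!EFinD.
  rewrite integralD //; first last.
  - exact: integrableZl.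
  - exact: (integrableD measurableT iFG (integrableZl measurableT t iA)).
  rewrite integralD //; first last.
  - exact: integrableZl.
  - exact: iFG.
  rewrite integralZl // integralZl //.
  rewrite -(fineK fA) -(fineK fB).
  have -> : surrisk P X psi G = (fine (surrisk P X psi G))%:E by rewrite fineK.
  have -> : (\int[P]_x (Floss G x)%:E)%E = (fine (surrisk P X psi G))%:E by rewrite fineK.
  rewrite -!EFinM -!EFinD lee_fin.
  rewrite -/a -/b; lra.
have : (\int[P]_w (Qf w * i w - psi w * i w)%:E = 0)%E.
  by rewrite -(fineK fA) -/a a0.
rewrite (_ : (fun w => (Qf w * i w - psi w * i w)%:E) = (fun w => (Qf w * i w)%:E - (psi w * i w)%:E)%E); last first.
  by apply: funext => w; rewrite EFinB.
rewrite (integralB_EFin (f1 := fun w => Qf w * i w) (f2 := fun w => psi w * i w)) //.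
rewrite -(fineK (integrable_fin_num measurableT iQi)) -(fineK (integrable_fin_num measurableT iPi)).
rewrite -EFinB => -[] /eqP; rewrite subr_eq0 => /eqP ->.
done.
Qed.

End Core.

Lemma pol_le {R : realType} (p g : R) : p = 1 \/ p = -1 ->
  p * (2 * sig g - 1) <= sgn g * (2 * sig g - 1).
Proof.
move=> hp.
have e := expR_gt0 g.
have hs : sig g * (1 + expR g) = expR g.
  by rewrite /sig divfK // gt_eqF // addr_gt0.
have /andP[s0 s1] := sig_ge0 g.
rewrite /sgn; case: ifP => hg.
  have e1 : 1 <= expR g by rewrite -expR0 ler_expR hg.
  have : 0 <= 2 * sig g - 1 by nra.
  by case: hp => ->; nra.
have e1 : expR g < 1 by rewrite expR_lt1 ltNge hg.
have : 2 * sig g - 1 <= 0 by nra.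
by case: hp => ->; nra.
Qed.

Section Transfer.
Variables (R : realType) (d0 : measure_display) (Omega : measurableType d0)
  (P : probability Omega R) (d1 : measure_display) (Xsp : measurableType d1)
  (X : Omega -> Xsp).
Hypothesis mX : measurable_fun setT X.


Lemma setint_ind (f : Omega -> R) (C : set Xsp) :
  (\int[P]_(w in X @^-1` C) (f w)%:E = \int[P]_w (f w * \1_C (X w))%:E)%E.
Proof.
rewrite integral_mkcond; apply: eq_integral => w _.
rewrite /patch /indic.
have -> : (w \in X @^-1` C) = (X w \in C) by [].
by case: (X w \in C); rewrite ?mulr1 ?mulr0.
Qed.

Lemma pol_decomp (pi : Xsp -> R) (U : Omega -> R) : policy pi ->
  P.-integrable setT (fun w => (U w)%:E) ->
  (\int[P]_w (pi (X w) * U w)%:E =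
   2%:E * \int[P]_w (U w * \1_(pi @^-1` [set 1]) (X w))%:E
   - \int[P]_w (U w * \1_[set: Xsp] (X w))%:E)%E.
Proof.
move=> [mpi hpi] iU.
set A := pi @^-1` [set 1].
have mA : measurable A.
  by have := mpi measurableT [set 1] (measurable_set1 1); rewrite setTI.
have iUA : P.-integrable setT (fun w => (U w * \1_A (X w))%:E).
  apply: (integrable_bdd _ _ _ _ iU).
    exact: (measurableT_comp (@measurable_indic _ _ R setT A mA) mX).
  by move=> w; rewrite /indic; case: (_ \in _); rewrite ?normr0 ?normr1.
have iUT : P.-integrable setT (fun w => (U w * \1_[set: Xsp] (X w))%:E).
  apply: (integrable_bdd _ _ _ _ iU).
    exact: (measurableT_comp (@measurable_indic _ _ R setT setT measurableT) mX).
  by move=> w; rewrite /indic; case: (_ \in _); rewrite ?normr0 ?normr1.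
rewrite -integralZl //.
rewrite -(integralB_EFin (f1 := fun w => 2 * (U w * \1_A (X w))) (f2 := fun w => U w * \1_[set: Xsp] (X w))) //; first last.
  apply: (eq_integrable measurableT (fun w => 2%:E * (U w * \1_A (X w))%:E)%E); last exact: integrableZl.
  by move=> w _; rewrite /= EFinM.
apply: eq_integral => w _.
rewrite -EFinB; congr (_%:E).
rewrite /indic in_setT mulr1.
case: (hpi (X w)) => hx; rewrite hx.
  by rewrite mem_set //=; ring.
rewrite memNset /=; first by ring.
rewrite /A /preimage /= hx => h.
have : (-1 : R) = 1 by []. 
lra.
Qed.

End Transfer.

Theorem theorem1 (R : realType)
  (d0 : measure_display) (Omega : measurableType d0) (P : probability Omega R)
  (d1 : measure_display) (Xsp : measurableType d1)
  (X : Omega -> Xsp) (T Y Y1 Ym1 psi : Omega -> R)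
  (* psi is a measurable function of the observables (X, T, Y) *)
  (f : (Xsp * R * R)%type -> R)
  (d : nat) (Theta : set 'rV[R]_d) (g : 'rV[R]_d -> Xsp -> R) :
  measurable_fun setT X -> measurable_fun setT T -> measurable_fun setT Y ->
  measurable_fun setT Y1 -> measurable_fun setT Ym1 ->
  (forall w, T w = 1 \/ T w = -1) ->
  (forall w, Y w = (if T w == 1 then Y1 w else Ym1 w)) ->
  cond_indep P X Y1 T -> cond_indep P X Ym1 T ->
  measurable_fun setT f -> (forall w, psi w = f (X w, T w, Y w)) ->
  P.-integrable setT (fun w => (Y1 w - Ym1 w)%:E) ->
  (* Assumption 1 *)
  P.-integrable setT (fun w => (psi w)%:E) ->
  condexp_eq P X psi (fun w => Y1 w - Ym1 w) ->
  (forall th, measurable_fun setT (g th)) ->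
  (* correct specification: G meets the unconstrained argmin *)
  (exists2 th0, Theta th0 &
     forall h : Xsp -> R, measurable_fun setT h ->
       (surrisk P X psi (g th0) <= surrisk P X psi h)%E) ->
  forall th_star, Theta th_star ->
    (forall th, Theta th -> (surrisk P X psi (g th_star) <= surrisk P X psi (g th))%E) ->
    Jpol P X Y1 Ym1 (fun x => sgn (g th_star x))
      = ereal_sup [set Jpol P X Y1 Ym1 pi | pi in [set pi | policy pi]].
Proof.
move=> mX _ _ _ _ _ _ _ _ _ _ iD ipsi hce mg [th0 Th0 hmin] th_star _ hstar.
set G := g th_star.
have mG : measurable_fun setT G by exact: mg.
have Gmin : forall h, measurable_fun setT h ->
    (surrisk P X psi G <= surrisk P X psi h)%E.
  by move=> h mh; apply: le_trans (hstar _ Th0) (hmin _ mh).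
set Q := @Qf R d0 Omega d1 Xsp X psi G.
have iQ : P.-integrable setT (fun w => (Q w)%:E) by exact: (@iQf R d0 Omega P d1 Xsp X psi mX ipsi G mG).
have HC : forall C, measurable C ->
    (\int[P]_w ((Y1 w - Ym1 w) * \1_C (X w))%:E = \int[P]_w (Q w * \1_C (X w))%:E)%E.
  move=> C mC.
  rewrite -(@setint_ind R d0 Omega P d1 Xsp X (fun w => Y1 w - Ym1 w) C).
  rewrite -(hce C mC) (@setint_ind R d0 Omega P d1 Xsp X psi C).
  exact: (@key R d0 Omega P d1 Xsp X psi mX ipsi G mG Gmin C mC).
have Jeq : forall pi, policy pi ->
    Jpol P X Y1 Ym1 pi = (\int[P]_w (pi (X w) * Q w)%:E)%E.
  move=> pi hpi; rewrite /Jpol.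
  rewrite (@pol_decomp R d0 Omega P d1 Xsp X mX pi _ hpi iD) (@pol_decomp R d0 Omega P d1 Xsp X mX pi _ hpi iQ).
  have [mpi _] := hpi.
  have mA : measurable (pi @^-1` [set 1]).
    by have := mpi measurableT [set 1] (measurable_set1 1); rewrite setTI.
  by rewrite !HC.
have psgn : policy (fun x => sgn (G x)).
  split; first exact: (measurableT_comp measurable_sgn mG).
  by move=> x; exact: sgn_pm.
have ipol : forall pi, policy pi ->
    P.-integrable setT (fun w => (pi (X w) * Q w)%:E).
  move=> pi [mpi hpi].
  apply: (eq_integrable measurableT (fun w => (Q w * pi (X w))%:E)).
    by move=> w _; rewrite mulrC.
  apply: (integrable_bdd _ _ _ _ iQ); first exact: (measurableT_comp mpi mX).
  by move=> w; case: (hpi (X w)) => ->; rewrite ?normrN normr1.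
apply/eqP; rewrite eq_le; apply/andP; split.
  by apply: ereal_sup_ubound; exists (fun x => sgn (G x)).
apply: ge_ereal_sup => y [pi hpi <-].
rewrite (Jeq _ hpi) (Jeq _ psgn).
apply: (le_integral measurableT (ipol _ hpi) (ipol _ psgn)).
move=> w _; rewrite lee_fin /Q /Qf.
rewrite mulrCA [X in _ <= X]mulrCA.
apply: ler_wpM2l => //.
by apply: pol_le; case: hpi => _; apply.
Qed.
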